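(* Let $\mathrm{SG}(n)$ denote the Sprague--Grundy value of a pile of $n$ tokens in the game $i\textsc{-Mark}(\{1\},\{2,3\})$. For every integer $n>3$ there exists an integer $i$ with $1\le i\le 49$ and $i\le n$ such that $\mathrm{SG}(n-i)=2$.
   Context: In the impartial game $i\textsc{-Mark}(\{1\},\{2,3\})$, played on a single pile of $n\ge0$ tokens, a move replaces $n$ by $n-1$ (if $n\ge 1$), or by $n/2$ if $n>0$ is even, or by $n/3$ if $n>0$ is divisible by $3$. The Sprague--Grundy value is defined recursively by $\mathrm{SG}(n)=\mathrm{mex}\{\mathrm{SG}(w): w \text{ an option of } n\}$, where $\mathrm{mex}(T)$ is the smallest nonnegative integer not in $T$. *)

(* Defs.v *)
From mathcomp Require Import all_boot.
Set Implicit Arguments. Unset Strict Implicit. Unset Printing Implicit Defensive.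

(* mex of a finite set of naturals (given as a sequence):
   the least m not in s.  Since at most size s values are excluded,
   the answer is among 0 .. size s. *)
Definition mex (s : seq nat) : nat :=
  find (fun m => m \notin s) (iota 0 (size s).+1).

Definition options (n : nat) : seq nat :=
  (if 0 < n then [:: n.-1] else [::]) ++
  (if (0 < n) && (2 %| n) then [:: n %/ 2] else [::]) ++
  (if (0 < n) && (3 %| n) then [:: n %/ 3] else [::]).

(* Sprague-Grundy values by recursion with fuel (all options of n are < n). *)
Fixpoint sg_fuel (fuel n : nat) : nat :=
  match fuel with
  | 0 => 0
  | fuel'.+1 => mex [seq sg_fuel fuel' w | w <- options n]
  end.

Definition SG (n : nat) : nat := sg_fuel n.+1 n.

Lemma SG_rec_check : [seq SG n | n <- iota 0 12] = [seq mex [seq SG w | w <- options n] | n <- iota 0 12].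
Proof. by vm_compute. Qed.

(* Main.v *)
Require Import Defs.
From mathcomp Require Import all_boot.
From mathcomp Require Import zify.
Set Implicit Arguments. Unset Strict Implicit. Unset Printing Implicit Defensive.

Lemma options_lt n w : w \in options n -> w < n.
Proof.
rewrite /options; case: n => [|n] //=.
rewrite inE => /orP[/eqP->//|]; rewrite mem_cat => /orP[];
  case: ifP => _; rewrite ?inE // => /eqP->; by rewrite ltn_Pdiv.
Qed.

Lemma sg_fuel_irr f g n : n < f -> n < g -> sg_fuel f n = sg_fuel g n.
Proof.
elim: f g n => [|f IH] [|g] n //= nf ng.
congr mex; apply/eq_in_map => w /options_lt wn.
apply: IH; lia.
Qed.

Lemma SG_rec n : SG n = mex [seq SG w | w <- options n].
Proof.
rewrite /SG /=; congr mex; apply/eq_in_map => w /options_lt wn.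
by rewrite /SG (@sg_fuel_irr n w.+1 w).
Qed.

Lemma mex_has s : has (fun m => m \notin s) (iota 0 (size s).+1).
Proof.
apply/negPn/negP => /hasPn H.
have : size (iota 0 (size s).+1) <= size s.
  apply: uniq_leq_size; first exact: iota_uniq.
  by move=> x /H; rewrite negbK.
by rewrite size_iota ltnn.
Qed.

Lemma mex_le s : mex s <= size s.
Proof. by have := mex_has s; rewrite has_find size_iota. Qed.

Lemma mex_notin s : mex s \notin s.
Proof.
have := nth_find 0 (mex_has s); rewrite /mex nth_iota ?add0n //.
rewrite ltnS; exact: (mex_le s).
Qed.

Lemma mex_min s m : m < mex s -> m \in s.
Proof.
move=> lt; have := before_find 0 lt.
rewrite nth_iota ?add0n; first by move/negbFE.
have := mex_le s; lia.
Qed.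

Lemma SG_le3 n : SG n <= 3.
Proof.
rewrite SG_rec; apply: leq_trans (mex_le _) _; rewrite size_map /options.
by case: (0 < n); case: (2 %| n); case: (3 %| n).
Qed.

Fixpoint build k : seq nat :=
  match k with
  | 0 => [::]
  | k'.+1 => let b := build k' in rcons b (mex [seq nth 0 b w | w <- options k'])
  end.

Lemma build_ok k : size (build k) = k /\ forall j, j < k -> nth 0 (build k) j = SG j.
Proof.
elim: k => [|k [Hs IH]] //=; split; first by rewrite size_rcons Hs.
move=> j; rewrite ltnS leq_eqVlt => /orP[/eqP->|jk].
  rewrite nth_rcons Hs ltnn eqxx SG_rec; congr mex.
  apply/eq_in_map => w /options_lt; exact: IH.
by rewrite nth_rcons Hs jk IH.
Qed.

Definition tab := build 144.
Definition chk (t : seq nat) := all (fun n => has (fun i => (i <= n) && (nth 0 t (n - i) == 2)) (iota 1 49)) (iota 4 140).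
Lemma small_check : chk tab.
Proof. vm_compute. reflexivity. Qed.

Lemma tab_ok j : j < 144 -> nth 0 tab j = SG j.
Proof. move=> h; rewrite /tab; exact: (proj2 (build_ok 144)). Qed.
Lemma small_check' n : n \in iota 4 140 -> has (fun i => (i <= n) && (nth 0 tab (n-i) == 2)) (iota 1 49).
Proof. move: n; apply/allP; exact: small_check. Qed.
Lemma small_case n : 3 < n -> n < 144 ->
  exists i : nat, [/\ 1 <= i, i <= 49, i <= n & SG (n - i) = 2].
Proof.
move=> h1 h2.
have hn : n \in iota 4 140 by rewrite mem_iota; apply/andP; split; lia.
case/hasP: (small_check' hn) => i.
rewrite mem_iota => /andP [i1 i2] /andP [i3 /eqP e].
have hs : n - i < 144 by clear e; lia.
rewrite (tab_ok hs) in e.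
exists i; split => //; lia.
Qed.

Definition dflt : seq nat := [:: 0; 1; 2; 3].
Definition dom (ds : seq (seq nat)) i := nth dflt ds i.
Definition inD (s : nat -> nat) ds := forall i, s i \in dom ds i.

Definition sat_tuple (full : bool) (t : seq nat) : bool :=
  match t with
  | [::] => true
  | v :: ovs => (v \notin ovs) && (full ==> all (fun m => m \in ovs) (iota 0 v))
  end.

Fixpoint product (ls : seq (seq nat)) : seq (seq nat) :=
  match ls with
  | [::] => [:: [::]]
  | l :: ls' => [seq v :: t | v <- l, t <- product ls']
  end.

Lemma product_mem (s : nat -> nat) ds sc :
  inD s ds -> map s sc \in product (map (dom ds) sc).
Proof.
move=> H; elim: sc => [|x sc IH] /=; first exact: mem_head.
by apply: allpairs_f => //; apply: H.
Qed.

Definition cstr := (nat * (seq nat * bool))%type.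

Definition upd (ds : seq (seq nat)) x (P : pred nat) :=
  set_nth dflt ds x (filter P (dom ds x)).

Lemma upd_sound s ds x (P : pred nat) : inD s ds -> P (s x) -> inD s (upd ds x P).
Proof.
move=> H Px i; rewrite /dom /upd nth_set_nth /=.
case: eqP => [->|_]; last exact: H.
by rewrite mem_filter Px; apply: H.
Qed.

Definition prop_c (ds : seq (seq nat)) (c : cstr) :=
  let: (p, (os, full)) := c in
  let sc := p :: os in
  let combos := filter (sat_tuple full) (product (map (dom ds) sc)) in
  foldl (fun ds' k => upd ds' (nth 0 sc k) (fun v => has (fun t => nth 0 t k == v) combos))
        ds (iota 0 (size sc)).

Definition satc (s : nat -> nat) (c : cstr) :=
  let: (p, (os, full)) := c in sat_tuple full (map s (p :: os)).

Lemma fold_upd_sound s combos sc ds ks :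
  map s sc \in combos -> (forall k, k \in ks -> k < size sc) -> inD s ds ->
  inD s (foldl (fun ds' k => upd ds' (nth 0 sc k)
                 (fun v => has (fun t => nth 0 t k == v) combos)) ds ks).
Proof.
move=> Tin; elim: ks ds => [|k ks IH] ds Hk H //=.
apply: IH => [k' kk'|]; first by apply: Hk; rewrite inE kk' orbT.
apply: upd_sound => //; apply/hasP; exists (map s sc) => //.
rewrite (nth_map 0) //; apply: Hk; exact: mem_head.
Qed.

Lemma prop_c_sound s ds c : inD s ds -> satc s c -> inD s (prop_c ds c).
Proof.
case: c => p [os full] H Hs; rewrite /prop_c.
apply: fold_upd_sound => //; last by move=> k; rewrite mem_iota.
rewrite mem_filter; apply/andP; split; first exact: Hs.
exact: (product_mem (p :: os) H).
Qed.

Definition prop_all ds (cs : seq cstr) := foldl prop_c ds cs.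

Lemma prop_all_sound s ds cs :
  inD s ds -> (forall c, c \in cs -> satc s c) -> inD s (prop_all ds cs).
Proof.
elim: cs ds => [|c cs IH] ds //= H Hc.
apply: IH => [|c' hc']; last by apply: Hc; rewrite inE hc' orbT.
by apply: prop_c_sound => //; apply: Hc; exact: mem_head.
Qed.

Fixpoint rounds n ds cs := match n with 0 => ds | n'.+1 => rounds n' (prop_all ds cs) cs end.

Lemma rounds_sound s n ds cs :
  inD s ds -> (forall c, c \in cs -> satc s c) -> inD s (rounds n ds cs).
Proof.
elim: n ds => [|n IH] ds //= H Hc; apply: IH => //; exact: prop_all_sound.
Qed.

Fixpoint refute fuel ds (cs : seq cstr) : bool :=
  match fuel with
  | 0 => false
  | f.+1 =>
    let ds' := rounds 1 ds cs in
    if has (fun d => d == [::]) ds' then true else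
    match [seq i <- iota 0 (size ds') | 1 < size (dom ds' i)] with
    | [::] => false
    | i :: _ => all (fun v => refute f (set_nth dflt ds' i [:: v]) cs) (dom ds' i)
    end
  end.

Lemma refute_sound s f ds cs :
  refute f ds cs -> inD s ds -> (forall c, c \in cs -> satc s c) -> False.
Proof.
elim: f ds => [|f IH] ds //=.
set ds' := rounds 1 ds cs => R H Hc.
have H' : inD s ds' by apply: rounds_sound.
case: ifP R => [/hasP [d dd /eqP de] _|_].
  have := H' (index d ds'); rewrite /dom nth_index //; by rewrite de.
case: [seq _ <- _ | _] => [//|i _] /allP /(_ (s i) (H' i)) R.
apply: (IH _ R) => // j; rewrite /dom nth_set_nth /=.
case: eqP => [->|_]; first exact: mem_head.
exact: H'.
Qed.

Definition lvls := [:: 1; 2; 3; 4; 6; 12].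
Definition lvl_pos r d : seq (nat * nat) :=
  let lo := (r + 23) %/ d in
  let hi := (r + 71) %/ d + (d != 1) in
  [seq (72 %/ d, e) | e <- iota lo (hi - lo).+1].
Definition positions r := flatten [seq lvl_pos r d | d <- lvls].

Definition lo r c := (r + 23) %/ (72 %/ c).
Definition lsize r d := ((r + 71) %/ d + (d != 1) - (r + 23) %/ d).+1.
Definition off r c :=
  if c == 72 then 0 else
  if c == 36 then lsize r 1 else
  if c == 24 then lsize r 1 + lsize r 2 else
  if c == 18 then lsize r 1 + lsize r 2 + lsize r 3 else
  if c == 12 then lsize r 1 + lsize r 2 + lsize r 3 + lsize r 4 else
  lsize r 1 + lsize r 2 + lsize r 3 + lsize r 4 + lsize r 6.
Definition find_pos (ps : seq (nat * nat)) r (p : nat * nat) : option nat :=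
  let j := off r p.1 + (p.2 - lo r p.1) in
  if nth (0, 0) ps j == p then Some j else None.
Definition opt_pred (ps : seq (nat * nat)) r c e : seq nat * bool :=
  if 0 < e then
    (if find_pos ps r (c, e.-1) is Some j then ([:: j], true) else ([::], false))
  else ([::], false).
Definition opt_k (ps : seq (nat * nat)) r k c e : seq nat * bool :=
  if k %| c then
    (if k %| e then
       (if find_pos ps r (c %/ k, e %/ k) is Some j then ([:: j], true) else ([::], false))
     else ([::], true))
  else ([::], false).
Definition gen ps r (p : nat * nat) : seq nat * bool :=
  let a := opt_pred ps r p.1 p.2 in
  let b := opt_k ps r 2 p.1 p.2 in
  let d := opt_k ps r 3 p.1 p.2 in
  (a.1 ++ b.1 ++ d.1, [&& a.2, b.2 & d.2]).
Definition cons_of ps r : seq cstr := [seq (i, gen ps r (nth (0, 0) ps i)) | i <- iota 0 (size ps)].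
Definition doms0 (ps : seq (nat * nat)) : seq (seq nat) := [seq (if p.1 == 72 then [:: 0; 1; 3] else dflt) | p <- ps].

Definition check r :=
  let ps := positions r in
  [&& all (fun p => 0 < p.1) ps,
      all (fun p => (p.1 == 72) ==> ((r + 23 <= p.2) && (p.2 <= r + 71))) ps &
      refute 20 (doms0 ps) (cons_of ps r)].

Lemma big_check : all check (iota 0 72).
Proof. vm_compute. reflexivity. Qed.
Lemma find_pos_ok ps r p j : find_pos ps r p = Some j -> nth (0, 0) ps j = p.
Proof. by rewrite /find_pos; case: eqP => [E [<-]|]. Qed.

Definition pos q (p : nat * nat) := p.1 * q + p.2.
Definition sig q (ps : seq (nat * nat)) j := SG (pos q (nth (0, 0) ps j)).

Lemma options_pos x : 0 < x -> options x =
  [:: x.-1] ++ (if 2 %| x then [:: x %/ 2] else [::]) ++ (if 3 %| x then [:: x %/ 3] else [::]).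
Proof. by move=> x0; rewrite /options x0. Qed.

Lemma div_pos k c e q : 0 < k -> k %| c -> k %| e -> (c * q + e) %/ k = c %/ k * q + e %/ k.
Proof.
move=> k0 /dvdnP [c' ->] /dvdnP [e' ->].
rewrite !mulnK // -mulnA (mulnC k q) mulnA -mulnDl mulnK //.
Qed.

Lemma opt_pred_A ps r q c e j : j \in (opt_pred ps r c e).1 -> sig q ps j = SG (c * q + e).-1.
Proof.
rewrite /opt_pred; case: ifP => // e0; case E: find_pos => [j'|] //.
rewrite inE => /eqP ->; rewrite /sig (find_pos_ok E) /pos /=; congr SG; lia.
Qed.

Lemma opt_pred_B ps r q c e : (opt_pred ps r c e).2 -> SG (c * q + e).-1 \in map (sig q ps) (opt_pred ps r c e).1.
Proof.
rewrite /opt_pred; case: ifP => // e0; case E: find_pos => [j'|] // _ /=.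
rewrite inE /sig (find_pos_ok E) /pos /=; apply/eqP; congr SG; lia.
Qed.

Lemma opt_k_A ps r q k c e j : 0 < k -> j \in (opt_k ps r k c e).1 ->
  k %| c * q + e /\ sig q ps j = SG ((c * q + e) %/ k).
Proof.
move=> k0; rewrite /opt_k; case: ifP => // kc; case: ifP => // ke; case E: find_pos => [j'|] //.
rewrite inE => /eqP ->; split.
  by rewrite dvdn_add // dvdn_mulr.
by rewrite /sig (find_pos_ok E) /pos /= div_pos.
Qed.

Lemma opt_k_B ps r q k c e : 0 < k -> (opt_k ps r k c e).2 -> k %| c * q + e ->
  SG ((c * q + e) %/ k) \in map (sig q ps) (opt_k ps r k c e).1.
Proof.
move=> k0; rewrite /opt_k; case: ifP => // kc.
have kcq : k %| c * q by rewrite dvdn_mulr.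
rewrite dvdn_addr //.
case: ifP => // ke; case E: find_pos => [j'|] // _ _ /=.
by rewrite inE /sig (find_pos_ok E) /pos /= div_pos.
Qed.

Lemma gen_sat ps r q i : 0 < q -> 0 < (nth (0, 0) ps i).1 ->
  satc (sig q ps) (i, gen ps r (nth (0, 0) ps i)).
Proof.
move=> q0; have : sig q ps i = SG (pos q (nth (0, 0) ps i)) by [].
case: (nth (0, 0) ps i) => c e /= si c0.
rewrite /pos /= in si.
set x := c * q + e.
have x0 : 0 < x by rewrite /x; nia.
set S := [seq SG w | w <- options x].
have HA : forall j, j \in (gen ps r (c, e)).1 -> sig q ps j \in S.
  move=> j; rewrite /gen /= !mem_cat => /orP [|/orP []] hj.
  - rewrite (opt_pred_A q hj); apply: map_f; rewrite options_pos //; exact: mem_head.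
  - have [d2 ->] := opt_k_A q (isT : 0 < 2) hj; apply: map_f.
    by rewrite options_pos // d2 /= !inE eqxx orbT.
  - have [d3 ->] := opt_k_A q (isT : 0 < 3) hj; apply: map_f.
    by rewrite options_pos // d3 /=; case: (2 %| x); rewrite /= !inE eqxx !orbT.
have HB : (gen ps r (c, e)).2 -> forall w, w \in options x -> SG w \in map (sig q ps) (gen ps r (c, e)).1.
  rewrite /gen /= => /and3P [f1 f2 f3] w; rewrite options_pos // !mem_cat map_cat !mem_cat.
  rewrite inE => /orP [/eqP ->|/orP []].
  - by rewrite opt_pred_B.
  - case: ifP => // d2; rewrite inE => /eqP ->; by rewrite map_cat mem_cat (@opt_k_B ps r q 2 c e isT f2 d2) ?orbT.
  - case: ifP => // d3; rewrite inE => /eqP ->; by rewrite map_cat mem_cat (@opt_k_B ps r q 3 c e isT f3 d3) ?orbT.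
rewrite /satc /sat_tuple si SG_rec -/S.
apply/andP; split.
  apply/negP => /mapP [j hj ej]; have := mex_notin S; rewrite ej.
  by move=> /negP; apply; apply: HA.
apply/implyP => hf; apply/allP => m; rewrite mem_iota add0n => /andP [_ hm].
have := mex_min hm; case/mapP => w hw ->; exact: HB.
Qed.

Lemma check_ok r : r < 72 -> check r.
Proof. by move=> hr; apply: (allP big_check); rewrite mem_iota. Qed.

Lemma check_ok' r : r < 72 ->
  [&& all (fun p => 0 < p.1) (positions r),
      all (fun p => (p.1 == 72) ==> ((r + 23 <= p.2) && (p.2 <= r + 71))) (positions r) &
      refute 20 (doms0 (positions r)) (cons_of (positions r) r)].
Proof. exact: check_ok. Qed.

Lemma le3_in v : v <= 3 -> v \in dflt.
Proof. by case: v => [|[|[|[|]]]]. Qed.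

Lemma le3_in' v : v <= 3 -> v != 2 -> v \in [:: 0; 1; 3].
Proof. by case: v => [|[|[|[|]]]]. Qed.

Lemma large_case n : 144 <= n ->
  exists i : nat, [/\ 1 <= i, i <= 49, i <= n & SG (n - i) = 2].
Proof.
move=> hn.
case: (boolP (has (fun i => SG (n - i) == 2) (iota 1 49))) => [/hasP [i hi /eqP e]|hno].
  exists i; move: hi; rewrite mem_iota => /andP [h1 h2]; split => //; lia.
exfalso.
have hr : n %% 72 < 72 by rewrite ltn_mod.
have hq : 0 < n %/ 72 - 1 by lia.
have hnq : n = 72 * (n %/ 72 - 1) + 72 + n %% 72 by lia.
move: hr hq hnq; set r := n %% 72; set q := n %/ 72 - 1 => hr hq hnq.
case/and3P: (check_ok' hr) => hpos hwin href.
set ps := positions r in hpos hwin href.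
apply: (refute_sound (s := sig q ps) href).
  move=> j; rewrite /dom /doms0.
  case: (ltnP j (size ps)) => hj; last first.
    by rewrite nth_default ?size_map //; apply: le3_in; apply: SG_le3.
  rewrite (nth_map (0, 0)) //.
  have pin : nth (0, 0) ps j \in ps by apply: mem_nth.
  case: eqP => [c72|_]; last by apply: le3_in; apply: SG_le3.
  have := (allP hwin) _ pin; rewrite c72 eqxx /= => /andP [w1 w2].
  apply: le3_in'; first exact: SG_le3.
  have := (hasPn hno) (72 + r - (nth (0, 0) ps j).2).
  rewrite mem_iota.
  have -> : n - (72 + r - (nth (0, 0) ps j).2) = pos q (nth (0, 0) ps j).
    by rewrite /pos c72; lia.
  by apply; apply/andP; split; lia.
move=> c; rewrite /cons_of => /mapP [i hi ->].
apply: gen_sat => //.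
apply: (allP hpos); apply: mem_nth; by move: hi; rewrite mem_iota.
Qed.

Theorem mainTheorem6 :
  forall n : nat, 3 < n ->
    exists i : nat, [/\ 1 <= i, i <= 49, i <= n & SG (n - i) = 2].
Proof.
move=> n h3; case: (ltnP n 144) => h.
  exact: small_case.
exact: large_case.
Qed.
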